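(* Let $\mathcal{A} \subseteq 2^{[8]}$ consist of the following 11 sets: $A_0=[8]$, $A_1=\{2,4,6,7,8\}$, $A_2=\{1,3,5,8\}$, $A_3=\{1,4,7,8\}$, $A_4=\{2,3,5,6\}$, $A_5=\{1,3,7\}$, $A_6=\{2,3,5\}$, $A_7=\{2,4,6\}$, $A_8=\{4,5,6,7\}$, $B_{1,2}=\{8\}$, $B_{3,4}=\{1\}$. Let $\mathcal{F} = \{[8]\} \cup \{[8]\setminus\{i\} : i \in [8]\} \cup \{[8]\setminus\{1,2\},\ [8]\setminus\{3,4\}\}$, and define the bijection $\mathcal{A}\to\mathcal{F}$ by $F_{A_0}=[8]$, $F_{A_i}=[8]\setminus\{i\}$ for $i\in[8]$, $F_{B_{1,2}}=[8]\setminus\{1,2\}$, $F_{B_{3,4}}=[8]\setminus\{3,4\}$. Then $\mathcal{F}$ is a filter and $\mathcal{A}$ satisfies Condition 1 with this filter and bijection, while every element $x \in [8]$ belongs to exactly $5$ of the $11$ sets of $\mathcal{A}$. Consequently, it is false that every family $\mathcal{A}\subseteq 2^{[n]}$ satisfying Condition 1 has an element of $[n]$ lying in at least half of the sets of $\mathcal{A}$.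
   Context: $[n]=\{1,\dots,n\}$. A family $\mathcal{F} \subseteq 2^{[n]}$ is a filter if $F \in \mathcal{F}$ and $F \subseteq G \subseteq [n]$ imply $G \in \mathcal{F}$. For $A \subseteq B \subseteq [n]$, $[A,B] = \{C : A \subseteq C \subseteq B\}$. A family $\mathcal{A} \subseteq 2^{[n]}$ satisfies Condition 1 if there exist a filter $\mathcal{F} \subseteq 2^{[n]}$ and a bijection $A \mapsto F_A$ from $\mathcal{A}$ onto $\mathcal{F}$ such that (i) $A \subseteq F_A$ for all $A \in \mathcal{A}$, and (ii) for distinct $A, B \in \mathcal{A}$, $[A,F_A] \cap [B,F_B] = \emptyset$ (equivalently, at least one of $A \setminus F_B$, $B \setminus F_A$ is nonempty). *)

(* Defs.v *)
From HB Require Import structures.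
From mathcomp Require Import all_boot.
Set Implicit Arguments. Unset Strict Implicit. Unset Printing Implicit Defensive.

(* Convention: the ground set [n] = {1,...,n} is represented by 'I_n,
   where the ordinal i : 'I_n stands for the element i+1 of [n]. *)

Definition is_filter (n : nat) (F : {set {set 'I_n}}) : Prop :=
  forall X Y : {set 'I_n}, X \in F -> X \subset Y -> Y \in F.

Definition interval (n : nat) (A B : {set 'I_n}) : {set {set 'I_n}} :=
  [set C : {set 'I_n} | (A \subset C) && (C \subset B)].

Definition cond1_with (n : nat) (A F : {set {set 'I_n}})
    (f : {set 'I_n} -> {set 'I_n}) : Prop :=
  [/\ is_filter F,
      {in A &, injective f},
      f @: A = F,
      (forall X, X \in A -> X \subset f X) &
      (forall X Y, X \in A -> Y \in A -> X != Y ->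
         [disjoint interval X (f X) & interval Y (f Y)])].

Definition condition1 (n : nat) (A : {set {set 'I_n}}) : Prop :=
  exists (F : {set {set 'I_n}}) (f : {set 'I_n} -> {set 'I_n}), cond1_with A F f.

Definition degree (n : nat) (A : {set {set 'I_n}}) (x : 'I_n) : nat :=
  #|[set X in A | x \in X]|.

Definition s8 (l : seq nat) : {set 'I_8} := [set i : 'I_8 | i.+1 \in l].
Definition comp8 (l : seq nat) : {set 'I_8} := [set i : 'I_8 | i.+1 \notin l].

Definition A0 : {set 'I_8} := [set: 'I_8].
Definition A1 := s8 [:: 2; 4; 6; 7; 8].
Definition A2 := s8 [:: 1; 3; 5; 8].
Definition A3 := s8 [:: 1; 4; 7; 8].
Definition A4 := s8 [:: 2; 3; 5; 6].
Definition A5 := s8 [:: 1; 3; 7].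
Definition A6 := s8 [:: 2; 3; 5].
Definition A7 := s8 [:: 2; 4; 6].
Definition A8 := s8 [:: 4; 5; 6; 7].
Definition B12 := s8 [:: 8].
Definition B34 := s8 [:: 1].

Definition calA : {set {set 'I_8}} :=
  [set A0; A1; A2; A3; A4; A5; A6; A7; A8; B12; B34].

Definition calF : {set {set 'I_8}} :=
  [set [set: 'I_8]; comp8 [:: 1]; comp8 [:: 2]; comp8 [:: 3]; comp8 [:: 4];
       comp8 [:: 5]; comp8 [:: 6]; comp8 [:: 7]; comp8 [:: 8];
       comp8 [:: 1; 2]; comp8 [:: 3; 4]].

(* The bijection A -> F (its values outside calA are irrelevant). *)
Definition fA (X : {set 'I_8}) : {set 'I_8} :=
  if X == A0 then [set: 'I_8]
  else if X == A1 then comp8 [:: 1]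
  else if X == A2 then comp8 [:: 2]
  else if X == A3 then comp8 [:: 3]
  else if X == A4 then comp8 [:: 4]
  else if X == A5 then comp8 [:: 5]
  else if X == A6 then comp8 [:: 6]
  else if X == A7 then comp8 [:: 7]
  else if X == A8 then comp8 [:: 8]
  else if X == B12 then comp8 [:: 1; 2]
  else if X == B34 then comp8 [:: 3; 4]
  else [set: 'I_8].

(* Main.v *)
Require Import Defs.
From mathcomp Require Import all_boot.
Set Implicit Arguments. Unset Strict Implicit.

Definition mask (X : {set 'I_8}) : seq bool := map (fun k => inord k \in X) (iota 0 8).

Lemma nth_mask X (i : 'I_8) : nth false (mask X) i = (i \in X).
Proof. by rewrite (nth_map 0) ?size_iota // nth_iota // add0n inord_val. Qed.

Lemma eq_mask (X Y : {set 'I_8}) : (X == Y) = (mask X == mask Y).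
Proof.
apply/eqP/eqP=> [->//|H]; apply/setP=> i; by rewrite -!nth_mask H.
Qed.

Definition subm (m1 m2 : seq bool) := all (fun k => nth false m1 k ==> nth false m2 k) (iota 0 8).

Lemma sub_mask (X Y : {set 'I_8}) : (X \subset Y) = subm (mask X) (mask Y).
Proof.
apply/subsetP/allP=> H.
  move=> k; rewrite mem_iota add0n => /andP[_ Hk].
  have := H (Ordinal Hk); rewrite -!(nth_mask _ (Ordinal Hk)) /=.
  by case: (nth false (mask X) k) => //= ->.
move=> i; rewrite -!nth_mask => Hi.
by have := H i; rewrite mem_iota add0n ltn_ord Hi => /(_ isT).
Qed.

Lemma mask_s8 l : mask (s8 l) = map (fun k => k.+1 \in l) (iota 0 8).
Proof. apply/eq_in_map => k; rewrite mem_iota add0n => /andP[_ Hk]. by rewrite inE inordK. Qed.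
Lemma mask_comp8 l : mask (comp8 l) = map (fun k => k.+1 \notin l) (iota 0 8).
Proof. apply/eq_in_map => k; rewrite mem_iota add0n => /andP[_ Hk]. by rewrite inE inordK. Qed.
Lemma mask_setT : mask [set: 'I_8] = nseq 8 true.
Proof. by rewrite /mask /= !inE. Qed.

Ltac msim := unfold A0, A1, A2, A3, A4, A5, A6, A7, A8, B12, B34;
  rewrite ?mask_s8 ?mask_comp8 ?mask_setT /=.

Lemma fA1 : fA A1 = comp8 [:: 1].
Proof. rewrite /fA !eq_mask; msim. done. Qed.

Definition sA := [:: A0; A1; A2; A3; A4; A5; A6; A7; A8; B12; B34].
Definition sF := [:: [set: 'I_8]; comp8 [:: 1]; comp8 [:: 2]; comp8 [:: 3]; comp8 [:: 4];
       comp8 [:: 5]; comp8 [:: 6]; comp8 [:: 7]; comp8 [:: 8];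
       comp8 [:: 1; 2]; comp8 [:: 3; 4]].

Lemma calA_sA : calA = [set X in sA].
Proof. by apply/setP=> X; rewrite !inE -!orbA. Qed.
Lemma calF_sF : calF = [set X in sF].
Proof. by apply/setP=> X; rewrite !inE -!orbA. Qed.

Lemma fAE : map fA sA = sF.
Proof. rewrite /sA /sF /= /fA !eq_mask; msim. done. Qed.

Lemma uniq_sA : uniq sA.
Proof. rewrite /sA /= !inE !eq_mask; msim. done. Qed.

Lemma uniq_sF : uniq (map mask sF).
Proof. rewrite /sF /=; msim. done. Qed.

Lemma card_filter_uniq (s : seq {set 'I_8}) (P : pred {set 'I_8}) :
  uniq s -> #|[set X in s | P X]| = count P s.
Proof.
move=> u; have -> : [set X in s | P X] = [set X in filter P s].
  by apply/setP=> X; rewrite !inE mem_filter andbC.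
by rewrite cardsE (card_uniqP _) ?filter_uniq // size_filter.
Qed.

Lemma interval_disj (X Y fX fY : {set 'I_8}) :
  [disjoint interval X fX & interval Y fY] = ~~ (X :|: Y \subset fX :&: fY).
Proof.
apply/idP/idP.
  move=> D; apply/negP=> S.
  move: (S); rewrite subsetI => /andP[S1 S2].
  have h1 : X :|: Y \in interval X fX by rewrite /interval inE subsetUl (subset_trans _ S1) ?subsetUr.
  have h2 : X :|: Y \in interval Y fY by rewrite /interval inE subsetUr (subset_trans _ S2) ?subsetUr.
  by rewrite (disjointFr D h1) in h2.
move=> N; rewrite disjoint_subset; apply/subsetP=> C; rewrite /interval !inE => /andP[XC CfX].
apply/negP=> /andP[YC CfY].
apply: (negP N); by rewrite subUset !subsetI (subset_trans XC CfX) (subset_trans XC CfY)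
  (subset_trans YC CfX) (subset_trans YC CfY).
Qed.

Definition pA := map (fun X => (mask X, mask (fA X))) sA.
Lemma pAE : pA = zip (map mask sA) (map mask sF).
Proof. by rewrite -fAE /pA; elim: sA => //= a s ->. Qed.

Lemma pA_ok : all (fun p => all (fun q => (p.1 == q.1) ||
   ~~ (subm p.1 q.2 && subm q.1 p.2)) pA) pA && all (fun p => subm p.1 p.2) pA.
Proof. rewrite pAE /sA /sF /=; msim. done. Qed.

Definition allm : seq (seq bool) :=
  foldr (fun _ acc => [seq b :: m | b <- [:: false; true], m <- acc]) [:: [::]] (iota 0 8).

Lemma mem_allm (m : seq bool) : size m = 8 -> m \in allm.
Proof.
case: m => [|b0 [|b1 [|b2 [|b3 [|b4 [|b5 [|b6 [|b7 [|]]]]]]]]] //= _.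
by case: b0; case: b1; case: b2; case: b3; case: b4; case: b5; case: b6; case: b7.
Qed.

Lemma size_mask X : size (mask X) = 8.
Proof. by rewrite size_map size_iota. Qed.

Lemma msF : map mask sF = [:: [:: true; true; true; true; true; true; true; true]; [:: false; true; true; true; true; true; true; true]; [:: true; false; true; true; true; true; true; true]; [:: true; true; false; true; true; true; true; true]; [:: true; true; true; false; true; true; true; true]; [:: true; true; true; true; false; true; true; true]; [:: true; true; true; true; true; false; true; true]; [:: true; true; true; true; true; true; false; true]; [:: true; true; true; true; true; true; true; false]; [:: false; false; true; true; true; true; true; true]; [:: true; true; false; false; true; true; true; true]].
Proof. rewrite /sF /=; msim. done. Qed.

Lemma filter_ok : all (fun m => all (fun mX => subm mX m ==> (m \in map mask sF)) (map mask sF)) allm.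
Proof. rewrite msF. by vm_compute. Qed.

Lemma mem_mask (s : seq {set 'I_8}) Y : (Y \in s) = (mask Y \in map mask s).
Proof.
elim: s => //= a s IH; by rewrite !inE eq_mask IH.
Qed.

Theorem mainTheorem3 :
  #|calA| = 11 /\
  is_filter calF /\
  cond1_with calA calF fA /\
  (forall x : 'I_8, degree calA x = 5) /\
  (condition1 calA /\ forall x : 'I_8, 2 * degree calA x < #|calA|) /\
  ~ (forall (n : nat) (A : {set {set 'I_n}}),
        condition1 A -> exists x : 'I_n, #|A| <= 2 * degree A x).
Proof.
have cardA : #|calA| = 11.
  by rewrite calA_sA cardsE (card_uniqP uniq_sA).
have filt : is_filter calF.
  move=> X Y; rewrite calF_sF !in_set mem_mask sub_mask => HX HXY.
  rewrite mem_mask.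
  have := allP filter_ok _ (mem_allm (size_mask Y)).
  by move=> /allP /(_ _ HX); rewrite HXY.
have deg : forall x : 'I_8, degree calA x = 5.
  move=> x; rewrite /degree calA_sA.
  have -> : [set X in [set X0 in sA] | x \in X] = [set X in sA | x \in X].
    by apply/setP=> X; rewrite !inE.
  rewrite card_filter_uniq ?uniq_sA //.
  case: x => m Hm.
  do 8 (case: m Hm => [|m] Hm; first by rewrite /sA /= !inE).
  by [].
have c1 : cond1_with calA calF fA.
  have [pd ps] := andP pA_ok.
  have inpA : forall X, X \in calA -> (mask X, mask (fA X)) \in pA.
    by move=> X; rewrite calA_sA in_set => HX; apply: (map_f (fun X => (mask X, mask (fA X)))).
  split=> //.
  - move=> X Y HX HY E; apply/eqP; rewrite eq_mask; apply/eqP.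
    have := allP pd _ (inpA X HX) => /allP /(_ _ (inpA Y HY)) /=.
    rewrite E.
    have := allP ps _ (inpA X HX); have := allP ps _ (inpA Y HY) => /= h1 h2.
    rewrite E in h2; by rewrite h1 h2 orbF => /eqP.
  - apply/setP=> Y; rewrite calF_sF calA_sA in_set -fAE.
    apply/imsetP/mapP=> [[X]|[X]]; rewrite ?in_set => HX ->; by exists X; rewrite ?in_set.
  - by move=> X HX; rewrite sub_mask; exact: (allP ps _ (inpA X HX)).
  - move=> X Y HX HY XY.
    have := allP pd _ (inpA X HX) => /allP /(_ _ (inpA Y HY)) /=.
    rewrite -eq_mask (negbTE XY) /= -!sub_mask.
    move: (fA X) (fA Y) => fX fY N.
    rewrite interval_disj subUset !subsetI.
    by apply: contra N => /andP[/andP[_ ->] /andP[-> _]].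
have cond : condition1 calA by exists calF, fA.
split; first done. split; first done. split; first done. split; first exact deg.
split; first by split=> // x; rewrite deg cardA.
move=> /(_ 8 calA cond) [x]; by rewrite deg cardA.
Qed.
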